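(* Let $X$ and $Y$ be Tychonoff spaces. If the free topological groups $F(X)$ and $F(Y)$ are topologically isomorphic, or if the free Abelian topological groups $A(X)$ and $A(Y)$ are topologically isomorphic, then $X$ is totally disconnected if and only if $Y$ is totally disconnected.
   Context: $F(X)$ is Markov's free topological group of $X$: a topological group containing $X$ as a generating subspace such that every continuous map from $X$ to a topological group extends uniquely to a continuous homomorphism from $F(X)$. $A(X)$ is Markov's free Abelian topological group, defined analogously with Abelian topological groups. A space is totally disconnected if any two distinct points are separated by a clopen set. *)

(* Defs.v *)
From HB Require Import structures.
From mathcomp Require Import all_boot all_order all_algebra.
From mathcomp Require Import all_classical all_reals topology normedtype.
Import numFieldNormedType.Exports.
Set Implicit Arguments. Unset Strict Implicit. Unset Printing Implicit Defensive.
Import Order.TTheory GRing.Theory Num.Theory.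
Local Open Scope classical_set_scope.

Definition tychonoff_space (R : realType) (T : topologicalType) : Prop :=
  hausdorff_space T /\
  forall (a : T) (B : set T), closed B -> ~ B a ->
    exists f : T -> R, continuous f /\ f a = 0%R /\ (forall b, B b -> f b = 1%R).

(** Totally disconnected, as in the paper: distinct points are separated by a clopen set. *)
Definition totally_disconnected_space (T : topologicalType) : Prop :=
  forall x y : T, x <> y -> exists U : set T, clopen U /\ U x /\ ~ U y.

Record topGroup := TopGroup {
  tg_carrier :> topologicalType;
  tg_mul : tg_carrier -> tg_carrier -> tg_carrier;
  tg_inv : tg_carrier -> tg_carrier;
  tg_one : tg_carrier;
  tg_mulA : forall x y z, tg_mul x (tg_mul y z) = tg_mul (tg_mul x y) z;
  tg_mul1g : forall x, tg_mul tg_one x = x;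
  tg_mulg1 : forall x, tg_mul x tg_one = x;
  tg_mulVg : forall x, tg_mul (tg_inv x) x = tg_one;
  tg_mulgV : forall x, tg_mul x (tg_inv x) = tg_one;
  tg_mul_cont : continuous (fun p : tg_carrier * tg_carrier => tg_mul p.1 p.2);
  tg_inv_cont : continuous tg_inv
}.
Arguments tg_mul {t}.
Arguments tg_inv {t}.
Arguments tg_one {t}.

Definition tg_abelian (G : topGroup) : Prop :=
  forall x y : G, tg_mul x y = tg_mul y x.

Definition group_hom (G H : topGroup) (h : G -> H) : Prop :=
  forall x y : G, h (tg_mul x y) = tg_mul (h x) (h y).

Definition top_embedding (X Y : topologicalType) (i : X -> Y) : Prop :=
  injective i /\ continuous i /\
  forall U : set X, open U -> exists V : set Y, open V /\ i @^-1` V = U.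

Definition generates (X : Type) (G : topGroup) (i : X -> G) : Prop :=
  forall S : set G,
    S tg_one -> (forall x y, S x -> S y -> S (tg_mul x y)) ->
    (forall x, S x -> S (tg_inv x)) -> (forall x, S (i x)) -> S = setT.

Definition is_free_topgroup (X : topologicalType) (G : topGroup) (i : X -> G) : Prop :=
  top_embedding i /\ generates i /\
  forall (H : topGroup) (f : X -> H), continuous f ->
    exists g : G -> H, [/\ group_hom g, continuous g, (forall x, g (i x) = f x) &
      forall g' : G -> H, group_hom g' -> continuous g' ->
        (forall x, g' (i x) = f x) -> g' = g].

Definition is_free_abelian_topgroup (X : topologicalType) (G : topGroup) (i : X -> G) : Prop :=
  tg_abelian G /\ top_embedding i /\ generates i /\
  forall (H : topGroup) (f : X -> H), tg_abelian H -> continuous f ->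
    exists g : G -> H, [/\ group_hom g, continuous g, (forall x, g (i x) = f x) &
      forall g' : G -> H, group_hom g' -> continuous g' ->
        (forall x, g' (i x) = f x) -> g' = g].

Definition top_group_iso (G H : topGroup) : Prop :=
  exists (h : G -> H) (k : H -> G),
    [/\ group_hom h, continuous h, continuous k, cancel h k & cancel k h].

(* Main.v *)
Require Import Defs.
From mathcomp Require Import all_boot all_order all_algebra.
From mathcomp Require Import all_classical all_reals topology normedtype.
Import numFieldNormedType.Exports.
Set Implicit Arguments. Unset Strict Implicit. Unset Printing Implicit Defensive.
Import Order.TTheory GRing.Theory Num.Theory.
Local Open Scope classical_set_scope.
Local Open Scope ring_scope.

Section GroupLemmas.
Variable G : topGroup.
Lemma tg_inv_uniq (a b : G) : tg_mul a b = tg_one -> b = tg_inv a.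
Proof.
move=> ab. by rewrite -(tg_mul1g b) -(tg_mulVg a) -tg_mulA ab tg_mulg1.
Qed.
Lemma tg_invK (a : G) : tg_inv (tg_inv a) = a.
Proof. by symmetry; apply: tg_inv_uniq; rewrite tg_mulVg. Qed.
Lemma tg_inv1 : tg_inv (tg_one : G) = tg_one.
Proof. by symmetry; apply: tg_inv_uniq; rewrite tg_mul1g. Qed.
Lemma tg_invM (a b : G) : tg_inv (tg_mul a b) = tg_mul (tg_inv b) (tg_inv a).
Proof.
symmetry; apply: tg_inv_uniq.
by rewrite -tg_mulA (tg_mulA b) tg_mulgV tg_mul1g tg_mulgV.
Qed.
Lemma tg_mulV_eq (a b : G) : tg_mul a (tg_inv b) = tg_one -> a = b.
Proof.
move=> h. by rewrite -(tg_mulg1 a) -(tg_mulVg b) tg_mulA h tg_mul1g.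
Qed.
End GroupLemmas.

Lemma hom_sym (G H : topGroup) (h : G -> H) (k : H -> G) :
  group_hom h -> cancel h k -> cancel k h -> group_hom k.
Proof. move=> hh hk kh x y; by rewrite -{1}(kh x) -{1}(kh y) -hh hk. Qed.

Lemma iso_sym (G H : topGroup) : top_group_iso G H -> top_group_iso H G.
Proof.
move=> [h [k [hh ch ck hk kh]]]; exists k, h; split => //.
exact: hom_sym hh hk kh.
Qed.

Section Rgroup.
Variable R : realType.
Lemma Radd_cont : continuous (fun p : R * R => p.1 + p.2).
Proof. exact: add_continuous. Qed.
Lemma Ropp_cont : continuous (fun p : R => - p).
Proof. exact: opp_continuous. Qed.
Definition Rgrp : topGroup :=
  @TopGroup R (fun x y => x + y) (fun x => - x) 0 (@addrA R) (@add0r R)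
    (@addr0 R) (@addNr R) (@addrN R) Radd_cont Ropp_cont.
Lemma Rgrp_abelian : tg_abelian Rgrp.
Proof. move=> x y; exact: addrC. Qed.

Lemma hom0 (G : topGroup) (f : G -> Rgrp) : group_hom f -> f tg_one = 0.
Proof.
move=> hf; have := hf tg_one tg_one; rewrite tg_mul1g /=.
by move=> e; apply: (@addrI _ (f tg_one)); rewrite addr0 -e.
Qed.
Lemma homV (G : topGroup) (f : G -> Rgrp) (a : G) : group_hom f ->
  f (tg_inv a) = - f a.
Proof.
move=> hf; have := hf a (tg_inv a); rewrite tg_mulgV (hom0 hf) /=.
by move=> e; apply: (@addrI _ (f a)); rewrite addrN -e.
Qed.

Definition ind (X : topologicalType) (U : set X) (x : X) : R :=
  if `[< U x >] then 1 else 0.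

Lemma ind_cont (X : topologicalType) (U : set X) : clopen U -> continuous (ind U).
Proof.
move=> [oU cU]; apply/continuousP => A _.
have oC : open (~` U) by rewrite openC.
case: (pselect (A 1)) => A1; case: (pselect (A 0)) => A0.
- rewrite (_ : _ @^-1` _ = setT); first exact: openT.
  apply/seteqP; split => x //= _; rewrite /ind; by case: asboolP.
- rewrite (_ : _ @^-1` _ = U) //.
  apply/seteqP; split => x /=; rewrite /ind; case: asboolP => //.
- rewrite (_ : _ @^-1` _ = ~` U) //.
  apply/seteqP; split => x /=; rewrite /ind; case: asboolP => //.
- rewrite (_ : _ @^-1` _ = set0); first exact: open0.
  apply/seteqP; split => x //=; rewrite /ind; case: asboolP => //.
Qed.
End Rgroup.

Section Words.
Variables (X : topologicalType) (G : topGroup) (jX : X -> G).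
Definition wgen (i : X * bool) : G := if i.2 then jX i.1 else tg_inv (jX i.1).
Definition weval (w : seq (X * bool)) : G := foldr (fun i acc => tg_mul (wgen i) acc) tg_one w.

Lemma weval_cat w1 w2 : weval (w1 ++ w2) = tg_mul (weval w1) (weval w2).
Proof. elim: w1 => [|i w IH] /=; first by rewrite tg_mul1g. by rewrite IH tg_mulA. Qed.

Hypothesis Gab : tg_abelian G.

Lemma invM_ab (a b : G) : tg_inv (tg_mul a b) = tg_mul (tg_inv a) (tg_inv b).
Proof. by rewrite tg_invM Gab. Qed.

Definition wflip (i : X * bool) := (i.1, ~~ i.2).
Lemma weval_inv w : tg_inv (weval w) = weval (map wflip w).
Proof.
elim: w => [|i w IH] /=; first exact: tg_inv1.
rewrite invM_ab IH; congr tg_mul; case: i => x [] /=; rewrite /wgen /=; [done|exact: tg_invK].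
Qed.

Lemma weval_rem (w : seq (X * bool)) j : j \in w -> weval w = tg_mul (wgen j) (weval (rem j w)).
Proof.
elim: w => [|a w IH] //=; rewrite inE.
case: (eqVneq j a) => [-> _|ne /= /IH ->]; first by [].
rewrite !tg_mulA; congr tg_mul; exact: Gab.
Qed.

Lemma words_cover : generates jX -> forall z : G, exists w, z = weval w.
Proof.
move=> gj z.
have -> : (exists w, z = weval w) = [set z | exists w, z = weval w] z by [].
rewrite (gj [set z | exists w, z = weval w]) //.
- by exists [::].
- by move=> a b [w1 ->] [w2 ->]; exists (w1 ++ w2); rewrite weval_cat.
- by move=> a [w ->]; exists (map wflip w); rewrite weval_inv.
- by move=> x; exists [:: (x, true)]; rewrite /= tg_mulg1.
Qed.
End Words.

Section Key.
Variables (R : realType) (X : topologicalType) (G : topGroup) (jX : X -> G).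
Hypothesis Gab : tg_abelian G.
Hypothesis hTD : totally_disconnected_space X.
Hypothesis univ : forall f : X -> Rgrp R, continuous f ->
  exists g : G -> Rgrp R, [/\ group_hom g, continuous g & forall x, g (jX x) = f x].

Lemma phi_eval (phi : G -> Rgrp R) : group_hom phi -> forall w,
  (phi (weval jX w) : R) = \sum_(i <- w) (if i.2 then (phi (jX i.1) : R) else - phi (jX i.1)).
Proof.
move=> hp; elim => [|i w IH] /=; first by rewrite big_nil hom0.
rewrite big_cons hp /= IH; congr (_ + _); rewrite /wgen; case: i.2 => //.
exact: homV.
Qed.

Lemma neq_bool (c b : bool) : c != b -> ~~ b = c.
Proof. by case: c; case: b. Qed.

Lemma wgen_cancel (x : X) (b : bool) :
  tg_mul (wgen jX (x, b)) (wgen jX (x, ~~ b)) = tg_one.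
Proof. by case: b; rewrite /wgen /=; [exact: tg_mulgV | exact: tg_mulVg]. Qed.

Lemma sep_list (x0 : X) (s : seq X) : (forall x, x \in s -> x != x0) ->
  exists U, [/\ clopen U, U x0 & forall x, x \in s -> ~ U x].
Proof.
elim: s => [|a s IH] hs.
  exists setT; split; [exact: clopenT | done | by []].
have [U [cU Ux0 hU]] : exists U, [/\ clopen U, U x0 & forall x, x \in s -> ~ U x].
  by apply: IH => x xs; apply: hs; rewrite inE xs orbT.
have ne : x0 <> a by move=> e; have := hs a; rewrite inE eqxx e eqxx => /(_ isT).
have [V [cV [Vx0 nVa]]] := hTD ne.
exists (U `&` V); split => //; first exact: clopenI.
move=> x; rewrite inE => /orP [/eqP -> [_ //]|xs [Ux _]]; exact: hU xs Ux.
Qed.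

Lemma sep_word n : forall w, (size w <= n)%N ->
  (forall U, clopen U -> forall phi : G -> Rgrp R, group_hom phi -> continuous phi ->
      (forall x, phi (jX x) = ind R U x) -> phi (weval jX w) = 0) ->
  weval jX w = tg_one.
Proof.
elim: n => [|n IHn] [|[x0 b0] w] //= sz hyp.
set i0 := (x0, b0).
set j := (x0, ~~ b0).
have hs : forall x, x \in [seq i.1 | i <- w & i.1 != x0] -> x != x0.
  by move=> x /mapP [i]; rewrite mem_filter => /andP [ne _] ->.
have [U [cU Ux0 hU]] := sep_list hs.
have [phi [hphi cphi iphi]] := univ (@ind_cont R _ _ cU).
have e0 := hyp U cU phi hphi cphi iphi.
have jw : j \in w.
  apply/negPn/negP => nj; move: e0; apply/eqP.
  have ev : weval jX (i0 :: w) = tg_mul (wgen jX i0) (weval jX w) by [].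
  rewrite -ev phi_eval //.
  rewrite (eq_big_seq (fun i => (i.1 == x0)%:R * (if b0 then 1 else -1))); last first.
    move=> i iw; rewrite !iphi /ind.
    case: (eqVneq i.1 x0) => [e|ne].
      have ib : i.2 = b0.
        move: iw; rewrite inE => /orP [/eqP -> //|iw].
        apply/eqP; apply: contraNT nj => nb; move: iw.
        have -> : i = j by rewrite /j; move: nb e; case: i => a c /= nb ->; rewrite -(neq_bool nb).
        by [].
      by rewrite e ib asboolT //= mul1r.
    rewrite asboolF /=; last first.
      apply: hU; apply/mapP; exists i => //; rewrite mem_filter ne /=.
      by move: iw; rewrite inE => /orP [/eqP eqi|//]; move: ne; rewrite eqi eqxx.
    by rewrite mul0r oppr0 if_same.
  rewrite -big_distrl /= mulf_neq0 //; last by case: ifP; rewrite ?oppr_eq0 oner_eq0.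
  rewrite big_cons /= eqxx; apply: lt0r_neq0; apply: (lt_le_trans ltr01).
  rewrite lerDl; apply: sumr_ge0 => i _; exact: ler0n.
have ev : weval jX (i0 :: w) = weval jX (rem j w).
  rewrite /= (weval_rem jX Gab jw) tg_mulA (_ : tg_mul (wgen jX i0) (wgen jX j) = tg_one) ?tg_mul1g //.
  exact: wgen_cancel.
rewrite [tg_mul _ _]ev; apply: IHn.
  by rewrite size_rem // -ltnS; exact: leq_ltn_trans (leq_pred _) sz.
move=> U' cU' phi' h1 h2 h3. have := hyp U' cU' phi' h1 h2 h3.
have ev' : tg_mul (wgen jX (x0, b0)) (weval jX w) = weval jX (rem j w) := ev.
by rewrite ev'.
Qed.
End Key.

Lemma cont_comp (A B C : topologicalType) (f : A -> B) (g : B -> C) :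
  continuous f -> continuous g -> continuous (fun x => g (f x)).
Proof. move=> cf cg x; exact: (continuous_comp (cf x) (cg (f x))). Qed.

Lemma K_lemma (R : realType) (X Y : topologicalType) (G : topGroup) (jX : X -> G) :
  totally_disconnected_space X -> is_free_abelian_topgroup jX ->
  forall g : Y -> G, continuous g -> injective g -> totally_disconnected_space Y.
Proof.
move=> hTD [Gab [[_ [cj _]] [hgen univ]]] g cg ig y1 y2 ne.
have univR : forall f : X -> Rgrp R, continuous f ->
  exists g : G -> Rgrp R, [/\ group_hom g, continuous g & forall x, g (jX x) = f x].
  move=> f cf; have [g' [h c e _]] := univ (Rgrp R) f (@Rgrp_abelian R) cf.
  by exists g'; split.
set z := tg_mul (g y1) (tg_inv (g y2)).
have zne : z <> tg_one by move=> /tg_mulV_eq /ig.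
have [w zw] := words_cover Gab hgen z.
have [U [cU [phi [hphi cphi iphi nz]]]] : exists U, clopen U /\ exists phi : G -> Rgrp R,
    [/\ group_hom phi, continuous phi, (forall x, phi (jX x) = ind R U x) & phi z <> 0].
  apply: contrapT => H; apply: zne; rewrite zw.
  apply: (sep_word Gab hTD univR (leqnn _)) => U cU phi h1 h2 h3; rewrite -zw.
  by apply: contrapT => nz; apply: H; exists U; split => //; exists phi; split.
have hint : forall a, (phi a : R) \is a Num.int.
  move=> a.
  have : [set a | (phi a : R) \is a Num.int] a; last by [].
  rewrite (hgen [set a | (phi a : R) \is a Num.int]) //=.
  - by rewrite hom0.
  - by move=> a1 a2 ha1 ha2; rewrite hphi rpredD.
  - by move=> a1 ha1; rewrite homV // rpredN.
  - by move=> x; rewrite iphi /ind; case: asboolP => _; [exact: rpred1 | exact: rpred0].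
set f := fun y => (phi (g y) : R).
have cf : continuous f by apply: cont_comp.
have fne : f y1 <> f y2.
  move=> e; apply: nz; rewrite /z hphi homV //=; apply/eqP; rewrite subr_eq0; apply/eqP; exact: e.
exists (f @^-1` [set f y1]); split; last by split => //= e; apply: fne.
split.
  rewrite (_ : f @^-1` [set f y1] = f @^-1` ball (f y1) 1).
    by apply: (continuousP _).1 cf _ (ball_open _ _).
  apply/seteqP; split => y /=.
    by move=> ->; exact: ballxx.
  rewrite /ball /= => lt1; apply/eqP; rewrite eq_sym -subr_eq0; apply/negPn/negP => nz0.
  have := norm_intr_ge1 (rpredB (hint (g y1)) (hint (g y))) nz0.
  by rewrite leNgt lt1.
apply: ((continuous_closedP f).1 cf [set f y1]); apply: accessible_closed_set1.
apply: hausdorff_accessible; exact: Rhausdorff.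
Qed.

Lemma A_branch (R : realType) (X Y : topologicalType) (AX AY : topGroup)
  (jX : X -> AX) (jY : Y -> AY) :
  is_free_abelian_topgroup jX -> is_free_abelian_topgroup jY ->
  top_group_iso AX AY -> totally_disconnected_space X -> totally_disconnected_space Y.
Proof.
move=> fX [_ [[ijY [cjY _]] _]] [h [k [hh ch ck hk kh]]] tX.
apply: (K_lemma R tX fX (g := fun y => k (jY y))).
  exact: cont_comp.
by move=> y1 y2 /(congr1 h); rewrite !kh => /ijY.
Qed.

Lemma F_branch (R : realType) (X Y : topologicalType) (FX FY AX AY : topGroup)
  (iX : X -> FX) (iY : Y -> FY) (jX : X -> AX) (jY : Y -> AY) :
  is_free_topgroup iX -> is_free_topgroup iY ->
  is_free_abelian_topgroup jX -> is_free_abelian_topgroup jY ->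
  top_group_iso FX FY -> totally_disconnected_space X -> totally_disconnected_space Y.
Proof.
move=> [[_ [ciX _]] [_ uFX]] [[_ [ciY _]] [_ uFY]] fX fY.
move=> [h [k [hh ch ck hk kh]]] tX.
have [AXab [[_ [cjX _]] [_ uAX]]] := fX.
have [AYab [[ijY [cjY _]] [_ uAY]]] := fY.
have [pi [hpi cpi epi _]] := uFX AX jX cjX.
have [pi' [hpi' cpi' epi' _]] := uFY AY jY cjY.
have cf : continuous (fun x => pi' (h (iX x))).
  by apply: cont_comp => //; apply: cont_comp.
have [lam [hlam clam elam _]] := uAX AY _ AYab cf.
have [g0 [_ _ _ u0]] := uFX AY _ cf.
have e1 : (fun a => lam (pi a)) = g0.
  apply: u0.
  - by move=> a b; rewrite hpi hlam.
  - exact: cont_comp.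
  - by move=> x; rewrite epi elam.
have e2 : (fun a => pi' (h a)) = g0.
  apply: u0 => //.
  - by move=> a b; rewrite hh hpi'.
  - exact: cont_comp.
apply: (K_lemma R tX fX (g := fun y => pi (k (iY y)))).
  by apply: cont_comp => //; apply: cont_comp.
move=> y1 y2 e; apply: ijY.
have E : forall y, lam (pi (k (iY y))) = jY y.
  move=> y; have := congr1 (fun F => F (k (iY y))) (etrans e1 (esym e2)).
  by rewrite /= kh epi'.
by rewrite -!E e.
Qed.

Unset Implicit Arguments.
Theorem corollary10p10 (R : realType) (X Y : topologicalType)
  (FX FY AX AY : topGroup) (iX : X -> FX) (iY : Y -> FY) (jX : X -> AX) (jY : Y -> AY) :
  tychonoff_space R X -> tychonoff_space R Y ->
  is_free_topgroup iX -> is_free_topgroup iY ->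
  is_free_abelian_topgroup jX -> is_free_abelian_topgroup jY ->
  (top_group_iso FX FY \/ top_group_iso AX AY) ->
  (totally_disconnected_space X <-> totally_disconnected_space Y).
Proof.
move=> _ _ fX fY aX aY [iso|iso]; split.
- exact: (F_branch R fX fY aX aY iso).
- exact: (F_branch R fY fX aY aX (iso_sym iso)).
- exact: (A_branch R aX aY iso).
- exact: (A_branch R aY aX (iso_sym iso)).
Qed.
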